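(* Let $t\ge 2$. Every $\mathbb{F}_q$-linear set of pseudoregulus type of the projective line $\Lambda=PG(1,q^t)$ is mapped by some element of $PGL(2,q^t)$ onto the linear set $\{\langle(x,x^q)\rangle_{q^t}:x\in\mathbb{F}_{q^t}^*\}=\{\langle(1,a)\rangle_{q^t}: a\in\mathbb{F}_{q^t}^*,\ N_{q^t/q}(a)=1\}$. In particular all $\mathbb{F}_q$-linear sets of pseudoregulus type of $PG(1,q^t)$ are projectively equivalent.
   Context: Let $\Lambda=PG(V,\mathbb{F}_{q^t})=PG(1,q^t)$ with $V$ a 2-dimensional $\mathbb{F}_{q^t}$-space; $\langle\mathbf u\rangle_{q^t}$ denotes the point defined by $\mathbf u\ne\mathbf 0$. Definition: given two distinct points $P_1=\langle\mathbf w\rangle_{q^t}$, $P_2=\langle\mathbf v\rangle_{q^t}$ of $\Lambda$, an automorphism $\tau$ of $\mathbb{F}_{q^t}$ with $\mathrm{Fix}(\tau)=\mathbb{F}_q$, and $\rho\in\mathbb{F}_{q^t}^*$, the set $L_{\rho,\tau}=\{\langle\lambda\mathbf w+\rho\lambda^\tau\mathbf v\rangle_{q^t}:\lambda\in\mathbb{F}_{q^t}^*\}$ is called an $\mathbb{F}_q$-linear set of pseudoregulus type of $\Lambda$, with transversal points $P_1,P_2$. $N_{q^t/q}$ denotes the norm from $\mathbb{F}_{q^t}$ to $\mathbb{F}_q$, and coordinates are with respect to a fixed basis of $V$. *)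

(* Defs.v *)
From HB Require Import structures.
From mathcomp Require Import all_boot all_order all_algebra all_field.
Set Implicit Arguments. Unset Strict Implicit. Unset Printing Implicit Defensive.
Import GRing.Theory.
Local Open Scope ring_scope.

Section PG1.
Variable L : finFieldType.

Definition vec2 (a b : L) : 'cV[L]_2 := \col_(i < 2) (if i == 0 :> nat then a else b).

Definition same_point (u u' : 'cV[L]_2) : Prop :=
  u != 0 /\ exists c : L, c != 0 /\ u' = c *: u.

(* A set of points of PG(1,L) is described by a set of nonzero representative
   vectors; two descriptions give the same point set. *)
Definition same_points (A B : 'cV[L]_2 -> Prop) : Prop :=
  (forall u, A u -> exists u', B u' /\ same_point u u') /\
  (forall u', B u' -> exists u, A u /\ same_point u u').

Definition mapv (M : 'M[L]_2) (A : 'cV[L]_2 -> Prop) : 'cV[L]_2 -> Prop :=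
  fun u => exists x, A x /\ u = M *m x.

Definition normq (q t : nat) (a : L) : L := \prod_(i < t) a ^+ (q ^ i).

(* Data of an F_q-linear set of pseudoregulus type: distinct points <w>, <v>,
   rho nonzero, tau a field automorphism with Fix(tau) = F_q = {x | x^q = x}. *)
Definition pr_data (q : nat) (w v : 'cV[L]_2) (rho : L) (tau : {rmorphism L -> L})
  : Prop :=
  [/\ w != 0, v != 0, ~ same_point w v, rho != 0 &
     bijective tau /\ (forall x : L, tau x = x <-> x ^+ q = x)].

Definition linset (w v : 'cV[L]_2) (rho : L) (tau : {rmorphism L -> L})
  : 'cV[L]_2 -> Prop :=
  fun u => exists lam : L, lam != 0 /\ u = lam *: w + (rho * tau lam) *: v.

Definition std_set (q : nat) : 'cV[L]_2 -> Prop :=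
  fun u => exists x : L, x != 0 /\ u = vec2 x (x ^+ q).

Definition std_set_norm (q t : nat) : 'cV[L]_2 -> Prop :=
  fun u => exists a : L, a != 0 /\ normq q t a = 1 /\ u = vec2 1 a.

End PG1.

(* Main.v *)
Require Import Defs.
From HB Require Import structures.
From mathcomp Require Import all_boot all_order all_algebra all_field.
From mathcomp Require Import ring.
Import GRing.Theory.
Local Open Scope ring_scope.
Section H.
Variable L : finFieldType.
Local Notation vec2 := (@vec2 L).

Definition mx22 (a b c d : L) : 'M[L]_2 :=
  \matrix_(i < 2, j < 2) (if i == 0 :> nat then (if j == 0 :> nat then a else b)
                          else (if j == 0 :> nat then c else d)).

Lemma ord2P (i : 'I_2) : i = 0 \/ i = 1.
Proof. case: i => [[|[|n]]] Hi; [left|right|]; try exact: val_inj. by []. Qed.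

Lemma ord1P (i : 'I_1) : i = 0.
Proof. by apply: val_inj; case: i => [[|n]]. Qed.

Lemma vec2_eta (u : 'cV[L]_2) : u = vec2 (u 0 0) (u 1 0).
Proof.
apply/matrixP => i j; rewrite !mxE (ord1P j).
by case: (ord2P i) => ->.
Qed.

Lemma vec2_inj a b c d : vec2 a b = vec2 c d -> a = c /\ b = d.
Proof.
move=> /matrixP H; split.
  by have := H 0 0; rewrite !mxE.
by have := H 1 0; rewrite !mxE.
Qed.

Lemma scale_vec2 c a b : c *: vec2 a b = vec2 (c * a) (c * b).
Proof. by apply/matrixP => i j; rewrite !mxE; case: ifP. Qed.

Lemma add_vec2 a b c d : vec2 a b + vec2 c d = vec2 (a + c) (b + d).
Proof. by apply/matrixP => i j; rewrite !mxE; case: ifP. Qed.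

Lemma vec2_0 : vec2 0 0 = 0.
Proof. by apply/matrixP => i j; rewrite !mxE; case: ifP. Qed.

Lemma vec2_eq0 a b : (vec2 a b == 0) = (a == 0) && (b == 0).
Proof.
apply/eqP/andP => [H|[/eqP-> /eqP->]]; last exact: vec2_0.
by move: H; rewrite -vec2_0 => /vec2_inj [-> ->].
Qed.

Lemma mul_mx22_vec2 a b c d x y :
  mx22 a b c d *m vec2 x y = vec2 (a * x + b * y) (c * x + d * y).
Proof.
apply/matrixP => i j; rewrite !mxE !big_ord_recr big_ord0 /= !mxE /= add0r.
by case: (ord2P i) => -> /=.
Qed.

Lemma mul_mx22 a b c d a' b' c' d' :
  mx22 a b c d *m mx22 a' b' c' d' =
  mx22 (a * a' + b * c') (a * b' + b * d') (c * a' + d * c') (c * b' + d * d').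
Proof.
apply/matrixP => i j; rewrite !mxE !big_ord_recr big_ord0 /= !mxE /= add0r.
by case: (ord2P i) => -> /=; case: (ord2P j) => -> /=.
Qed.

Lemma mx22_1 : mx22 1 0 0 1 = 1%:M.
Proof.
apply/matrixP => i j; rewrite !mxE.
by case: (ord2P i) => -> /=; case: (ord2P j) => -> /=.
Qed.


Lemma scale_pt (a b x y : L) : a != 0 -> x != 0 -> y / x = b / a ->
  vec2 x y = (x / a) *: vec2 a b.
Proof.
move=> a0 x0 e; rewrite scale_vec2 mulfVK //; congr vec2.
by rewrite -(mulfVK x0 y) e; ring.
Qed.

Lemma indep_sc (a b c e : L) : vec2 a b != 0 -> vec2 c e != 0 ->
  ~ same_point (vec2 a b) (vec2 c e) -> a * e - c * b != 0.
Proof.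
rewrite !vec2_eq0 => h1 h2 h3; apply/eqP => /eqP; rewrite subr_eq0 => /eqP E.
apply: h3; split; first by rewrite vec2_eq0.
have [a0|a0] := eqVneq a 0.
  move: h1; rewrite a0 eqxx /= => b0.
  move: E; rewrite a0 mul0r => /esym/eqP; rewrite mulf_eq0 (negbTE b0) orbF => /eqP c0.
  move: h2; rewrite c0 eqxx /= => e0.
  exists (e / b); split; first by rewrite mulf_neq0 ?invr_eq0.
  by rewrite scale_vec2 mulr0 mulfVK.
have c0 : c != 0.
  apply/eqP => c0; move: E; rewrite c0 mul0r => /eqP; rewrite mulf_eq0 (negbTE a0) /=.
  by move=> e0; move: h2; rewrite c0 e0 eqxx.
exists (c / a); split; first by rewrite mulf_neq0 ?invr_eq0.
rewrite scale_vec2 mulfVK //; congr vec2.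
by rewrite mulrAC -E mulrC mulKf.
Qed.

Lemma indep (w v : 'cV[L]_2) : w != 0 -> v != 0 -> ~ same_point w v ->
  w 0 0 * v 1 0 - v 0 0 * w 1 0 != 0.
Proof.
move=> h1 h2 h3; have := @indep_sc (w 0 0) (w 1 0) (v 0 0) (v 1 0).
by rewrite -!vec2_eta; apply.
Qed.

Definition Pm (w v : 'cV[L]_2) (rho : L) :=
  mx22 (w 0 0) (rho * v 0 0) (w 1 0) (rho * v 1 0).

Definition Qm (w v : 'cV[L]_2) (rho : L) :=
  let D := rho * (w 0 0 * v 1 0 - v 0 0 * w 1 0) in
  mx22 (rho * v 1 0 / D) (- (rho * v 0 0) / D) (- w 1 0 / D) (w 0 0 / D).

Lemma Pm_vec2 (w v : 'cV[L]_2) (rho lam mu : L) :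
  Pm w v rho *m vec2 lam mu = lam *: w + (rho * mu) *: v.
Proof.
rewrite mul_mx22_vec2 [in RHS](vec2_eta w) [in RHS](vec2_eta v) !scale_vec2 add_vec2.
by congr vec2; ring.
Qed.

Lemma QPm (w v : 'cV[L]_2) (rho : L) : rho != 0 -> w 0 0 * v 1 0 - v 0 0 * w 1 0 != 0 ->
  Qm w v rho *m Pm w v rho = 1%:M.
Proof.
move=> r0 D0; rewrite /Qm /Pm mul_mx22 -mx22_1.
have DD : rho * (w 0 0 * v 1 0 - v 0 0 * w 1 0) != 0 by rewrite mulf_neq0.
move: DD; set D := rho * _ => DD.
have eD : D = rho * (w 0 0 * v 1 0 - v 0 0 * w 1 0) by [].
congr mx22; rewrite eD; field; by rewrite D0 r0.
Qed.


Lemma card_roots (p : {poly L}) : p != 0 -> (#|[set x | root p x]| < size p)%N.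
Proof.
move=> p0; rewrite cardE; apply: max_poly_roots => //; last exact: enum_uniq.
by apply/allP => x; rewrite mem_enum inE.
Qed.

Lemma card_roots_Xn (n : nat) (P : pred L) : (0 < n)%N ->
  (forall x, P x -> x ^+ n = 1) -> (#|[set x | P x]| <= n)%N.
Proof.
move=> n0 H.
have p0 : ('X^n - 1 : {poly L}) != 0.
  by rewrite -size_poly_eq0 -polyC1 size_XnsubC.
have := @card_roots _ p0; rewrite -polyC1 size_XnsubC // ltnS.
apply: leq_trans; apply: subset_leq_card; apply/subsetP => x.
rewrite !inE => Px; have := H x Px.
by rewrite rootE !hornerE => ->; rewrite subrr.
Qed.

Lemma card_gt1 : (1 < #|L|)%N.
Proof. by rewrite (cardD1 0) (cardD1 1) !inE oner_eq0. Qed.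

Variables (q t : nat).
Hypotheses (hq : (1 < q)%N) (hcard : #|L| = (q ^ t)%N).
Let d := (\sum_(i < t) q ^ i)%N.

Lemma image_eq (phi : L -> L)
  (phiM : forall x y, phi (x * y) = phi x * phi y)
  (phi0 : forall x, x != 0 -> phi x != 0)
  (phiF : forall x, phi x = x <-> x ^+ q = x)
  (phiN : forall y, y != 0 -> (phi y / y) ^+ d = 1) :
  forall a, (a != 0 /\ a ^+ d = 1) <-> exists y, y != 0 /\ phi y / y = a.
Proof.
pose A := [set~ (0 : L)].
pose g y := phi y / y.
pose Im := g @: A.
pose S := [set a : L | (a != 0) && (a ^+ d == 1)].
pose K := [set x : L | (x != 0) && (x ^+ q == x)].
have gnz y : y != 0 -> g y != 0 by move=> y0; rewrite /g mulf_neq0 ?invr_eq0 ?phi0.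
have ImS : Im \subset S.
  apply/subsetP => a /imsetP [y]; rewrite !inE => y0 ->.
  by rewrite gnz //= phiN.
have d0 : (0 < d)%N.
  rewrite /d; case: t hcard => [|t'] hc.
    by move: card_gt1; rewrite hc.
  by rewrite big_ord_recl expn0.
have cS : (#|S| <= d)%N.
  apply: card_roots_Xn => // x /andP [_ /eqP].
  done.
have cK : (#|K| <= q.-1)%N.
  apply: card_roots_Xn => [|x /andP [x0 /eqP]]; first by case: q hq => [|[]].
  case: q hq => [|q'] // _; rewrite exprSr => /(congr1 (fun z => z / x)).
  by rewrite mulfK // divff.
have gK y y' : y != 0 -> y' != 0 -> g y = g y' -> y / y' \in K.
  move=> y0 y'0 e; rewrite inE mulf_neq0 ?invr_eq0 //=; apply/eqP/phiF.
  have e2 : phi y = y * (phi y' / y') by have e' : phi y / y = phi y' / y' := e; rewrite -e' mulrC mulfVK.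
  have : phi (y / y') * phi y' = y / y' * phi y'.
    by rewrite -phiM mulfVK // e2 mulrA mulrAC.
  by move/(mulIf (phi0 _ y'0)).
have cA : (#|A| <= #|Im| * #|K|)%N.
  pose r b := odflt 1 [pick y in A | g y == b].
  have rP y : y \in A -> r (g y) \in A /\ g (r (g y)) = g y.
    move=> yA; rewrite /r; case: pickP => [z /andP [zA /eqP ->]|] //=.
    by move/(_ y); rewrite yA eqxx.
  pose f y := (g y, y / r (g y)).
  rewrite -cardsX -(@card_in_imset _ _ f A).
    apply: subset_leq_card; apply/subsetP => z /imsetP [y yA ->].
    rewrite inE /= (imset_f _ yA) /=.
    have [rA rg] := rP y yA; apply: gK; rewrite ?rg //.
    + by move: yA; rewrite /A in_setC1.
    + by move: rA; rewrite /A in_setC1.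
  move=> y y' yA y'A [e1]; rewrite e1 => e2.
  have [rA _] := rP y' y'A.
  move: rA; rewrite /A in_setC1 => r0.
  exact: (mulIf (invr_neq0 r0) e2).
have cL : #|A| = (q.-1 * d)%N by rewrite /A cardsC1 hcard predn_exp.
have q1 : (0 < q.-1)%N by case: q hq => [|[]].
have cIm : (d <= #|Im|)%N.
  rewrite -(leq_pmul2l q1); rewrite cL in cA; apply: (leq_trans cA).
  by rewrite mulnC leq_mul2r cK orbT.
have eIS : Im = S.
  by apply/eqP; rewrite eqEcard ImS /=; exact: leq_trans cS cIm.
move=> a; split.
  move=> [a0 ad].
  have : a \in S by rewrite inE a0 ad eqxx.
  rewrite -eIS => /imsetP [y yA ->]; exists y; split => //.
  by move: yA; rewrite /A in_setC1.
move=> [y [y0 <-]].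
have : g y \in S by rewrite -eIS; apply: imset_f; rewrite /A in_setC1.
by rewrite inE => /andP [-> /eqP].
Qed.

Definition good (phi : L -> L) : Prop :=
  [/\ (forall x y, phi (x * y) = phi x * phi y),
      (forall x, x != 0 -> phi x != 0),
      (forall x, phi x = x <-> x ^+ q = x) &
      (forall y, y != 0 -> (phi y / y) ^+ d = 1)].

Lemma key {phi1 phi2 : L -> L} : good phi1 -> good phi2 ->
  forall {l : L}, l != 0 -> exists x, x != 0 /\ phi2 x / x = phi1 l / l.
Proof.
move=> [a1 b1 c1 e1] [a2 b2 c2 e2] l l0.
have [_ h1] := image_eq phi1 a1 b1 c1 e1 (phi1 l / l).
have [h2 _] := image_eq phi2 a2 b2 c2 e2 (phi1 l / l).
by apply: h2; apply: h1; exists l.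
Qed.

Lemma yfix (y : L) : y != 0 -> (y ^+ d) ^+ q = y ^+ d.
Proof.
move=> y0.
have yc : y ^+ (q ^ t) = y by rewrite -hcard expf_card.
have qt0 : (0 < q ^ t)%N by rewrite expn_gt0; case: q hq.
have y1 : y ^+ (q ^ t).-1 = 1.
  apply: (mulfI y0); rewrite mulr1 -exprS prednK //.
have e : (d * q = (q ^ t).-1 + d)%N.
  rewrite predn_exp -/d; case: q hq => // q' _ /=; by rewrite mulnS addnC mulnC.
by rewrite -exprM e exprD y1 mul1r.
Qed.

Lemma good_frob : good (fun x => x ^+ q).
Proof.
split => //.
- by move=> x y; rewrite exprMn.
- by move=> x x0; rewrite expf_neq0.
- move=> y y0; rewrite exprMn exprVn -!exprM mulnC exprM yfix //.
  by rewrite divff // expf_neq0.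
Qed.

Lemma good_tau (tau : {rmorphism L -> L}) :
  (forall x, tau x = x <-> x ^+ q = x) -> good tau.
Proof.
move=> Ht; split => //.
- by move=> x y; rewrite rmorphM.
- by move=> x x0; rewrite fmorph_eq0.
- move=> y y0; rewrite exprMn exprVn -rmorphXn.
  have -> : tau (y ^+ d) = y ^+ d by apply/Ht; apply: yfix.
  by rewrite divff // expf_neq0.
Qed.

Lemma PQ_nz {P Q : 'M[L]_2} {z : 'cV[L]_2} : Q *m P = 1%:M -> z != 0 -> P *m z != 0.
Proof.
move=> QP z0; apply: contraNneq z0 => e.
by rewrite -(mul1mx z) -QP -mulmxA e mulmx0.
Qed.

Lemma sp_P {P Q : 'M[L]_2} {z z' : 'cV[L]_2} {c : L} : Q *m P = 1%:M -> z != 0 ->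
  c != 0 -> z' = c *: z -> same_point (P *m z) (P *m z').
Proof.
move=> QP z0 c0 ->; split; first exact: PQ_nz QP z0.
by exists c; split => //; rewrite scalemxAr.
Qed.

Lemma prdata_QP {w v : 'cV[L]_2} {rho : L} {tau : {rmorphism L -> L}} : pr_data q w v rho tau ->
  Qm w v rho *m Pm w v rho = 1%:M.
Proof. by case=> w0 v0 nsp r0 _; exact: (QPm w v rho r0 (indep w v w0 v0 nsp)). Qed.

Lemma prdata_good {w v : 'cV[L]_2} {rho : L} {tau : {rmorphism L -> L}} : pr_data q w v rho tau -> good tau.
Proof. by case=> _ _ _ _ [_ Ht]; exact: good_tau Ht. Qed.

Lemma vnz (a b : L) : a != 0 -> vec2 a b != 0.
Proof. by move=> a0; rewrite vec2_eq0 negb_and a0. Qed.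

Lemma divnz (a b : L) : a != 0 -> b != 0 -> a / b != 0.
Proof. by move=> a0 b0; rewrite mulf_neq0 ?invr_eq0. Qed.

Lemma part1 w v rho (tau : {rmorphism L -> L}) : pr_data q w v rho tau ->
  exists M : 'M[L]_2, M \in unitmx /\
    same_points (mapv M (linset w v rho tau)) (@std_set L q).
Proof.
move=> H; have QP := prdata_QP H; have gt := prdata_good H.
exists (Qm w v rho); split; first exact: (mulmx1_unit QP).1.
split.
- move=> u [x [[l [l0 ->]] ->]].
  rewrite -Pm_vec2 mulmxA QP mul1mx.
  have [x0 [x00 e]] := key gt good_frob l0.
  exists (vec2 x0 (x0 ^+ q)); split; first by exists x0.
  split; first exact: vnz.
  exists (x0 / l); split; first exact: divnz.
  exact: scale_pt.
- move=> u' [x [x0 ->]].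
  have [l [l0 e]] := key good_frob gt x0.
  exists (vec2 l (tau l)); split.
    exists (l *: w + (rho * tau l) *: v); split; first by exists l.
    by rewrite -Pm_vec2 mulmxA QP mul1mx.
  split; first exact: vnz.
  exists (x / l); split; first exact: divnz.
  by apply: scale_pt => //; rewrite e.
Qed.

Lemma part2 : same_points (@std_set L q) (@std_set_norm L q t).
Proof.
have [fa fb fc fe] := good_frob.
have IE := image_eq (fun x => x ^+ q) fa fb fc fe.
split.
- move=> u [x [x0 ->]].
  have [a0 ad] : x ^+ q / x != 0 /\ (x ^+ q / x) ^+ d = 1.
    by apply/IE; exists x.
  exists (vec2 1 (x ^+ q / x)); split.
    exists (x ^+ q / x); split => //; split; last by []. by rewrite /Defs.normq prodrXr.
  split; first exact: vnz.
  exists (1 / x); split; first by rewrite divnz ?oner_eq0.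
  by apply: scale_pt; rewrite ?oner_eq0 ?divr1.
- move=> u' [a [a0 [na ->]]].
  have ad : a ^+ d = 1 by rewrite -na /Defs.normq prodrXr.
  have [x [x0 e]] : exists y, y != 0 /\ y ^+ q / y = a by apply/IE.
  exists (vec2 x (x ^+ q)); split; first by exists x.
  split; first exact: vnz.
  exists (1 / x); split; first by rewrite divnz ?oner_eq0.
  by apply: scale_pt; rewrite ?oner_eq0 ?divr1.
Qed.

Lemma part3 (w1 v1 : 'cV[L]_2) (rho1 : L) (tau1 : {rmorphism L -> L})
             (w2 v2 : 'cV[L]_2) (rho2 : L) (tau2 : {rmorphism L -> L}) :
  pr_data q w1 v1 rho1 tau1 -> pr_data q w2 v2 rho2 tau2 ->
  exists M : 'M[L]_2, M \in unitmx /\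
    same_points (mapv M (linset w1 v1 rho1 tau1)) (linset w2 v2 rho2 tau2).
Proof.
move=> H1 H2; have QP1 := prdata_QP H1; have g1 := prdata_good H1.
have QP2 := prdata_QP H2; have g2 := prdata_good H2.
exists (Pm w2 v2 rho2 *m Qm w1 v1 rho1); split.
  by rewrite unitmx_mul (mulmx1_unit QP2).2 (mulmx1_unit QP1).1.
split.
- move=> u [x [[l [l0 ->]] ->]].
  rewrite -Pm_vec2 -mulmxA (mulmxA (Qm _ _ _)) QP1 mul1mx.
  have [x0 [x00 e]] := key g1 g2 l0.
  exists (Pm w2 v2 rho2 *m vec2 x0 (tau2 x0)); split.
    by exists x0; split => //; rewrite Pm_vec2.
  apply: (sp_P (c := x0 / l) QP2); [exact: vnz | exact: divnz | exact: scale_pt].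
- move=> u' [m [m0 ->]].
  have [l [l0 e]] := key g2 g1 m0.
  exists (Pm w2 v2 rho2 *m vec2 l (tau1 l)); split.
    exists (l *: w1 + (rho1 * tau1 l) *: v1); split; first by exists l.
    by rewrite -Pm_vec2 -mulmxA (mulmxA (Qm _ _ _)) QP1 mul1mx.
  rewrite -Pm_vec2.
  apply: (sp_P (c := m / l) QP2); [exact: vnz | exact: divnz |].
  by apply: scale_pt => //; rewrite e.
Qed.
End H.

Theorem mainTheorem10 (L : finFieldType) (q t : nat)
  (ht : (2 <= t)%N) (hcard : #|L| = (q ^ t)%N) :
  (forall (w v : 'cV[L]_2) (rho : L) (tau : {rmorphism L -> L}),
     pr_data q w v rho tau ->
     exists M : 'M[L]_2, M \in unitmx /\
       same_points (mapv M (linset w v rho tau)) (@std_set L q))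
  /\ same_points (@std_set L q) (@std_set_norm L q t)
  /\ (forall (w1 v1 : 'cV[L]_2) (rho1 : L) (tau1 : {rmorphism L -> L})
             (w2 v2 : 'cV[L]_2) (rho2 : L) (tau2 : {rmorphism L -> L}),
        pr_data q w1 v1 rho1 tau1 -> pr_data q w2 v2 rho2 tau2 ->
        exists M : 'M[L]_2, M \in unitmx /\
          same_points (mapv M (linset w1 v1 rho1 tau1)) (linset w2 v2 rho2 tau2)).
Proof.
have hq : (1 < q)%N.
  move: (card_gt1 L); rewrite hcard.
  case: q hcard => [|[|q']] _ //; first by rewrite exp0n //; case: t ht.
  by rewrite exp1n.
split; first exact: part1 hq hcard.
split; first exact: part2 hq hcard.
exact: part3 hq hcard.
Qed.
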